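(* Let $\mu$ be a measure on the Borel subsets of $(0,\infty)$ with $\int_0^{\infty}\frac{\lambda}{\lambda^2 + 1} \,\mathrm{d}\mu(\lambda)< \infty$, let $\mathcal{R}=\{z\in\mathbb{C}:\Re(z)>0\}$, and define the analytic function $F_\mu:\mathcal{R}\to\mathbb{C}$ by $F_\mu(z)=\int_0^\infty\{e^{-\lambda z}-e^{-\lambda}\}\,\mathrm{d}\mu(\lambda)$. Then $\Phi=F_\mu$ satisfies: (a) for all $0<a<b<\infty$, $\lim_{y\to\pm\infty} e^{-\pi|y|}\int_a^b\left|\frac{\Phi(x+iy)}{x+iy}\right|\mathrm{d}x=0$; (b) for every $\eta>0$, $\sup_{x\ge\eta}\int_{-\infty}^\infty\left|\frac{\Phi(x+iy)}{x+iy}\right|e^{-\pi|y|}\,\mathrm{d}y<\infty$; (c) $\lim_{x\to\infty}\int_{-\infty}^\infty\left|\frac{\Phi(x+iy)}{x+iy}\right|e^{-\pi|y|}\,\mathrm{d}y=0$. *)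

(* Defs.v *)
From mathcomp Require Import all_boot all_order all_algebra.
From mathcomp Require Import all_classical all_reals all_analysis.
From mathcomp Require Import complex.
Set Implicit Arguments. Unset Strict Implicit. Unset Printing Implicit Defensive.
Import Order.TTheory GRing.Theory Num.Theory.
Local Open Scope classical_set_scope.
Local Open Scope ring_scope.
Local Open Scope complex_scope.

(* F_mu(z) = \int_0^oo (e^{-l z} - e^{-l}) dmu(l), for z = x + i y with x > 0.
   The complex-valued integral is, by definition, (integral of the real part)
   + i (integral of the imaginary part); with z = x + iy,
   e^{-l z} = e^{-l x} cos(l y) - i e^{-l x} sin(l y).
   mu is a measure on the Borel sets of R; only its restriction to the Borel
   subsets of (0,oo) is used. *)
Definition F_mu (R : realType) (mu : {measure set R -> \bar R}) (z : R[i]) : R[i] :=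
  let x := complex.Re z in let y := complex.Im z in
  (Rintegral mu `]0, +oo[ (fun l => expR (- (l * x)) * cos (l * y) - expR (- l)))
  +i* (Rintegral mu `]0, +oo[ (fun l => - (expR (- (l * x)) * sin (l * y)))).

Definition absquot (R : realType) (Phi : R[i] -> R[i]) (x y : R) : R :=
  Normc.normc (Phi (x +i* y) / (x +i* y)).

(* Main.v *)
Require Import Defs.
From mathcomp Require Import all_boot all_order all_algebra.
From mathcomp Require Import all_classical all_reals all_analysis.
From mathcomp Require Import complex.
From mathcomp Require Import measurable_realfun.
From mathcomp Require Import ring lra.
Import Order.TTheory GRing.Theory Num.Def Num.Theory.
Import numFieldNormedType.Exports.
Local Open Scope classical_set_scope.
Local Open Scope ring_scope.

Section S.
Context {R : realType}.

Lemma sin_abs_le (t : R) : `|sin t| <= `|t|.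
Proof.
wlog t0 : t / 0 <= t.
  move=> H; case: (leP 0 t) => [/H//|t0].
  by rewrite -normrN -sinN -(normrN t); apply: H; rewrite oppr_ge0 ltW.
have [c _ ] := @MVT_segment R sin cos 0 t t0 (fun x _ => is_derive_sin x)
  (continuous_subspaceT (@continuous_sin R)).
rewrite sin0 subr0 subr0 => ->.
by rewrite normrM ler_piMl// cos_max.
Qed.

Lemma one_minus_cos (t : R) : 1 - cos t <= t ^+ 2 / 2.
Proof.
have -> : t = (t / 2) *+ 2 by rewrite -mulr_natr divfK.
rewrite cos_mulr2n cos2sin2.
have := sin_abs_le (t / 2).
set s := sin _; set u := t / 2 => h.
have h2 : s ^+ 2 <= u ^+ 2.
  by rewrite -real_normK ?num_real// -[u ^+ 2]real_normK ?num_real// lerXn2r// ?nnegrE.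
rewrite -mulr_natr; lra.
Qed.

Lemma expN_lip (p q : R) : 0 <= p -> 0 <= q ->
  `|expR (- p) - expR (- q)| <= `|p - q|.
Proof.
wlog pq : p q / p <= q.
  move=> H p0 q0; case: (leP p q) => [/H->//|/ltW qp].
  by rewrite distrC (distrC p); apply: H.
move=> p0 q0.
have e1 : expR (- q) <= expR (- p) by rewrite ler_expR lerN2.
rewrite ger0_norm ?subr_ge0// ler0_norm ?subr_le0// opprB.
have h := expR_ge1Dx (p - q).
have -> : expR (- q) = expR (- p) * expR (p - q).
  by rewrite -expRD; congr expR; ring.
have hp : expR (- p) <= 1 by rewrite -expR0 ler_expR oppr_le0.
have hp0 : 0 < expR (- p) := expR_gt0 _.
nra.
Qed.

Definition uu (x y l : R) := expR (- (l * x)) * cos (l * y) - expR (- l).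
Definition vv (x y l : R) := - (expR (- (l * x)) * sin (l * y)).
Definition psi (x l : R) :=
  minr (l * (1 + x^-1)) ((expR (- (l * x)) + expR (- l)) / x).

Lemma core_beta (l x y : R) :
  uu x y l ^+ 2 + vv x y l ^+ 2 <= (expR (- (l * x)) + expR (- l)) ^+ 2.
Proof.
rewrite /uu /vv.
have := cos2Dsin2 (l * y); have := cos_geN1 (l * y).
have := expR_gt0 (- (l * x)); have := expR_gt0 (- l).
set E := expR (- (l * x)); set e := expR (- l); set c := cos (l * y); set s := sin (l * y).
move=> e0 E0 c1 cs.
have -> : (E * c - e) ^+ 2 + (- (E * s)) ^+ 2 = (E + e) ^+ 2 - 2 * (E * e * (1 + c)).
  have -> : (- (E * s)) ^+ 2 = E ^+ 2 * s ^+ 2 by rewrite sqrrN exprMn.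
  have -> : s ^+ 2 = 1 - c ^+ 2 by rewrite -cs; ring.
  ring.
have hc : 0 <= 1 + c by lra.
rewrite lerBlDr lerDl; apply: mulr_ge0 => //; apply: mulr_ge0 => //; apply: mulr_ge0; exact: ltW.
Qed.

Lemma core_alpha (l x y : R) : 0 < l -> 0 < x ->
  uu x y l ^+ 2 + vv x y l ^+ 2 <= l ^+ 2 * ((x - 1) ^+ 2 + y ^+ 2).
Proof.
move=> l0 x0; rewrite /uu /vv.
have cs := cos2Dsin2 (l * y); have c1 := one_minus_cos (l * y).
have E0 := expR_gt0 (- (l * x)); have e0 := expR_gt0 (- l).
have E1 : expR (- (l * x)) <= 1 by rewrite -expR0 ler_expR oppr_le0 mulr_ge0 ?ltW.
have e1 : expR (- l) <= 1 by rewrite -expR0 ler_expR oppr_le0 ltW.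
have lip := expN_lip (l * x) l (mulr_ge0 (ltW l0) (ltW x0)) (ltW l0).
move: cs c1 E0 e0 E1 e1 lip.
set E := expR (- (l * x)); set e := expR (- l); set c := cos (l * y); set s := sin (l * y).
move=> cs c1 E0 e0 E1 e1 lip.
have h1 : (E - e) ^+ 2 <= (l * x - l) ^+ 2.
  by rewrite -[(E - e) ^+ 2]real_normK ?num_real// -[(l * x - l) ^+ 2]real_normK ?num_real// lerXn2r ?nnegrE.
have h2 : E * e * (1 - c) <= 1 - c.
  have : 0 <= 1 - c by rewrite subr_ge0 cos_le1.
  have : E * e <= 1 by nra.
  nra.
have -> : (E * c - e) ^+ 2 + (- (E * s)) ^+ 2 = (E - e) ^+ 2 + 2 * (E * e * (1 - c)).
  have -> : (- (E * s)) ^+ 2 = E ^+ 2 * s ^+ 2 by rewrite sqrrN exprMn.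
  have -> : s ^+ 2 = 1 - c ^+ 2 by rewrite -cs; ring.
  ring.
have e2 : (l * y) ^+ 2 = l ^+ 2 * y ^+ 2 by rewrite exprMn.
have e3 : (l * x - l) ^+ 2 = l ^+ 2 * (x - 1) ^+ 2 by ring.
rewrite e2 in c1; rewrite e3 in h1; rewrite mulrDr; lra.
Qed.

Lemma sqrt_le (a b : R) : 0 <= b -> a <= b ^+ 2 -> Num.sqrt a <= b.
Proof.
move=> b0 ab; by rewrite -(ger0_norm b0) -sqrtr_sqr ler_sqrt// sqr_ge0.
Qed.

Lemma core (l x y : R) : 0 < l -> 0 < x ->
  Num.sqrt (uu x y l ^+ 2 + vv x y l ^+ 2) <=
  Num.sqrt (x ^+ 2 + y ^+ 2) * psi x l.
Proof.
move=> l0 x0.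
have xN : x <= Num.sqrt (x ^+ 2 + y ^+ 2).
  by rewrite -{1}(ger0_norm (ltW x0)) -sqrtr_sqr ler_sqrt ?addr_ge0 ?sqr_ge0// lerDl sqr_ge0.
have N2 : Num.sqrt (x ^+ 2 + y ^+ 2) ^+ 2 = x ^+ 2 + y ^+ 2.
  by rewrite sqr_sqrtr ?addr_ge0 ?sqr_ge0.
move: xN N2; set N := Num.sqrt _ => xN N2.
have N0 : 0 <= N := sqrtr_ge0 _.
have l0' := ltW l0; have x0' := ltW x0.
have hx' : 0 <= 1 + x^-1 by rewrite addr_ge0 // invr_ge0.
have hE : 0 <= expR (- (l * x)) + expR (- l) by rewrite addr_ge0 // expR_ge0.
have xN1 : 1 <= N / x by rewrite ler_pdivlMr// mul1r.
rewrite /psi; case: (leP (l * (1 + x^-1)) _) => _.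
- apply: sqrt_le; first by rewrite !mulr_ge0.
  apply: (le_trans (core_alpha l x y l0 x0)).
  have h : l * (N + 1) <= N * (l * (1 + x^-1)).
    rewrite mulrCA ler_pM2l// mulrDr mulr1 lerD2l.
    by rewrite -[N * x^-1]/(N / x).
  apply: le_trans (_ : (l * (N + 1)) ^+ 2 <= _); last first.
    by rewrite lerXn2r ?nnegrE// !mulr_ge0 // addr_ge0.
  rewrite exprMn ler_pM2l ?exprn_gt0//; nra.
- apply: sqrt_le.
    by rewrite mulr_ge0// divr_ge0.
  apply: (le_trans (core_beta l x y)).
  have hd : 0 <= (expR (- (l * x)) + expR (- l)) / x by rewrite divr_ge0.
  have hN : 0 <= N * ((expR (- (l * x)) + expR (- l)) / x) by rewrite mulr_ge0.
  rewrite lerXn2r ?nnegrE //.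
  by rewrite mulrCA ler_peMr.
Qed.
End S.

Section S2.
Context {R : realType}.
Local Open Scope ereal_scope.

Lemma le_integral_nm {d} {T : measurableType d} {mu : {measure set T -> \bar R}}
  {D : set T} {f g : T -> \bar R} :
  (forall x, D x -> 0 <= f x) -> (forall x, D x -> f x <= g x) ->
  \int[mu]_(x in D) f x <= \int[mu]_(x in D) g x.
Proof.
move=> f0 fg.
have g0 : forall x, D x -> 0 <= g x by move=> x Dx; exact: le_trans (f0 x Dx) (fg x Dx).
have neg (h : T -> \bar R) : (forall x, D x -> 0 <= h x) -> (h \_ D)^\- = cst 0.
  move=> h0; apply/funext => x.
  exact: (@ge0_funenegE _ _ [set: T] _ (fun y _ => erestrict_ge0 h0 y) x (in_setT x)).
have pos (h : T -> \bar R) : (forall x, D x -> 0 <= h x) -> (h \_ D)^\+ = h \_ D.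
  move=> h0; apply/funext => x.
  exact: (@ge0_funeposE _ _ [set: T] _ (fun y _ => erestrict_ge0 h0 y) x (in_setT x)).
rewrite /integral (neg f)// (neg g)// (pos f)// (pos g)//.
apply: leeB => //.
apply: le_ereal_sup => _ [h /= hf <-]; exists h => //= x.
apply: (le_trans (hf x)); rewrite /patch; case: ifPn => // /set_mem Dx.
exact: fg.
Qed.
End S2.

Section MU.
Context {R : realType} (mu : {measure set R -> \bar R}).
Hypothesis hmu : (\int[mu]_(l in `]0%R, +oo[) (l / (l ^+ 2 + 1))%:E < +oo)%E.
Local Notation D0 := (`]0%R, +oo[%classic : set R).

Lemma mD0 : measurable D0. Proof. exact: measurable_itv. Qed.

Definition gg (l : R) := l / (l ^+ 2 + 1).

Lemma m_gg : measurable_fun [set: R] gg.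
Proof.
apply: continuous_measurable_fun => l.
have h : l ^+ 2 + 1 != 0 by rewrite gt_eqF// ltr_wpDl ?sqr_ge0.
apply: (@continuousM R R^o id (fun l : R => (l ^+ 2 + 1)^-1)); first exact: cvg_id.
apply: (@continuousV R R^o (fun l : R => l ^+ 2 + 1)) => //.
apply: (@continuousD R R^o R^o (fun l : R => l ^+ 2) (cst 1)); last exact: cst_continuous.
exact: (@continuousM R R^o id id); exact: cvg_id.
Qed.

Lemma m_expx (x : R) : measurable_fun [set: R] (fun l => expR (- (l * x))).
Proof.
apply: measurableT_comp; [exact: measurable_expR | apply: measurable_funN].
by apply: measurable_funM.
Qed.

Lemma m_uu x y : measurable_fun [set: R] (uu x y).
Proof.
apply: measurable_funB; last first.
  by apply: measurableT_comp; [exact: measurable_expR | apply: measurable_funN].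
apply: measurable_funM; first exact: m_expx.
apply: measurableT_comp; last by apply: measurable_funM.
by apply: continuous_measurable_fun; exact: continuous_cos.
Qed.

Lemma m_vv x y : measurable_fun [set: R] (vv x y).
Proof.
apply: measurable_funN; apply: measurable_funM; first exact: m_expx.
apply: measurableT_comp; last by apply: measurable_funM.
by apply: continuous_measurable_fun; exact: continuous_sin.
Qed.

Lemma m_psi x : measurable_fun [set: R] (psi x).
Proof.
apply: measurable_minr; first by apply: measurable_funM.
apply: measurable_funM => //; apply: measurable_funD; first exact: m_expx.
by apply: measurableT_comp; [exact: measurable_expR | apply: measurable_funN].
Qed.

Lemma i_gg : mu.-integrable D0 (EFin \o gg).
Proof.
apply/integrableP; split.
  by apply/measurable_EFinP; apply: measurable_funTS; exact: m_gg.
apply: le_lt_trans hmu; rewrite le_eqVlt; apply/orP; left; apply/eqP.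
apply: eq_integral => l; rewrite inE /= in_itv /= andbT => l0.
rewrite ger0_norm //; apply: divr_ge0; [exact: ltW | by rewrite addr_ge0 ?sqr_ge0].
Qed.


Lemma expN_le_inv (t : R) : 0 < t -> expR (- t) <= t^-1.
Proof.
move=> t0; rewrite expRN lef_pV2 ?posrE ?expR_gt0//.
have := expR_ge1Dx t; lra.
Qed.

Lemma psi_ge0 (x l : R) : 0 < x -> 0 <= l -> 0 <= psi x l.
Proof.
move=> x0 l0; have x0' := ltW x0; rewrite /psi le_min; apply/andP; split.
  by rewrite mulr_ge0// addr_ge0// invr_ge0.
by rewrite divr_ge0// addr_ge0// expR_ge0.
Qed.

Lemma psi_ub (x l : R) : 0 < x -> 0 < l -> psi x l <= 2 * (1 + x^-1) ^+ 2 * gg l.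
Proof.
move=> x0 l0; rewrite /gg mulrA.
have d0 : 0 < l ^+ 2 + 1 by rewrite ltr_wpDl ?sqr_ge0.
rewrite ler_pdivlMr//.
have u0 : 0 < x^-1 by rewrite invr_gt0.
move: u0; set u := x^-1 => u0.
case: (leP l 1) => l1.
  have h : psi x l <= l * (1 + u) by rewrite /psi ge_min lexx.
  have h2 : 0 <= l ^+ 2 + 1 := ltW d0.
  apply: le_trans (_ : l * (1 + u) * (l ^+ 2 + 1) <= _).
    by rewrite ler_pM2r.
  have l2 : l ^+ 2 <= 1 by nra.
  have a : (1 + u) * (l ^+ 2 + 1) <= 2 * (1 + u) ^+ 2 by nra.
  have -> : l * (1 + u) * (l ^+ 2 + 1) = l * ((1 + u) * (l ^+ 2 + 1)) by ring.
  have -> : 2 * (1 + u) ^+ 2 * l = l * (2 * (1 + u) ^+ 2) by ring.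
  by rewrite ler_pM2l.
have h : psi x l <= (expR (- (l * x)) + expR (- l)) / x.
  by rewrite /psi ge_min lexx orbT.
have w0 : 0 < l^-1 by rewrite invr_gt0.
have wl : l^-1 * l = 1 by rewrite mulVf// gt_eqF.
have E1 : expR (- (l * x)) <= l^-1 * u.
  by rewrite /u -invfM expN_le_inv// mulr_gt0.
have e1 : expR (- l) <= l^-1 by rewrite expN_le_inv.
have w1 : l^-1 <= 1 by rewrite invf_le1// ltW.
move: w0 wl E1 e1 w1; set w := l^-1; set E := expR _; set e := expR _.
move=> w0 wl E1 e1 w1.
have h3 : (E + e) / x <= w * (1 + u) * u.
  by rewrite ler_pM2r// mulrDr mulr1; lra.
apply: le_trans (_ : w * (1 + u) * u * (l ^+ 2 + 1) <= _).
  by rewrite ler_pM2r//; apply: le_trans h h3.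
have -> : w * (1 + u) * u * (l ^+ 2 + 1) = (1 + u) * u * (l + w).
  have wl2 : w * l ^+ 2 = l by rewrite expr2 mulrA wl mul1r.
  transitivity ((1 + u) * u * (w * l ^+ 2 + w)); first ring.
  by rewrite wl2.
have a : (1 + u) * u * (l + w) <= (1 + u) * u * (2 * l).
  by rewrite ler_pM2l ?mulr_gt0 ?addr_gt0//; lra.
apply: le_trans a _.
have -> : (1 + u) * u * (2 * l) = (2 * l) * ((1 + u) * u) by ring.
have -> : 2 * (1 + u) ^+ 2 * l = (2 * l) * ((1 + u) ^+ 2) by ring.
rewrite ler_pM2l ?mulr_gt0//; nra.
Qed.

Lemma i_psi (x : R) : 0 < x -> mu.-integrable D0 (EFin \o psi x).
Proof.
move=> x0.
have ig := integrableZl mD0 (2 * (1 + x^-1) ^+ 2) i_gg.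
apply: (le_integrable mD0 _ _ ig).
- by apply/measurable_EFinP; apply: measurable_funTS; exact: m_psi.
- move=> l; rewrite /= in_itv /= andbT => l0.
  have l0' := ltW l0.
  have g0 : 0 <= gg l by rewrite /gg divr_ge0 // addr_ge0 // sqr_ge0.
  rewrite lee_fin ger0_norm ?psi_ge0 // ger0_norm ?psi_ub //.
  by rewrite mulr_ge0 // mulr_ge0 // sqr_ge0.
Qed.

Definition K (x : R) := \int[mu]_(l in D0) psi x l.

Lemma K_ge0 x : 0 < x -> 0 <= K x.
Proof.
move=> x0; apply: Rintegral_ge0 => l; rewrite /= in_itv /= andbT => l0.
exact: psi_ge0 (ltW l0).
Qed.

Lemma psi_mono (x1 x2 l : R) : 0 < x1 -> x1 <= x2 -> 0 < l -> psi x2 l <= psi x1 l.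
Proof.
move=> x10 x12 l0; have x20 := lt_le_trans x10 x12.
have iv : x2^-1 <= x1^-1 by rewrite lef_pV2 ?posrE.
rewrite /psi le_min; apply/andP; split.
  rewrite ge_min; apply/orP; left; rewrite ler_pM2l// lerD2l//.
rewrite ge_min; apply/orP; right.
apply: ler_pM; rewrite ?addr_ge0 ?expR_ge0 ?invr_ge0 ?(ltW x20)//.
rewrite lerD2r ler_expR lerN2 ler_pM2l//.
Qed.

Lemma K_mono (x1 x2 : R) : 0 < x1 -> x1 <= x2 -> K x2 <= K x1.
Proof.
move=> x10 x12; have x20 := lt_le_trans x10 x12.
apply: le_Rintegral; [exact: mD0 | exact: i_psi | exact: i_psi |].
by move=> l; rewrite /= in_itv /= andbT => l0; exact: psi_mono.
Qed.

Lemma intZ (k : R) (f : R -> R) : mu.-integrable D0 (EFin \o f) ->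
  mu.-integrable D0 (EFin \o (fun l => k * f l)).
Proof.
move=> /(integrableZl mD0 k).
have -> : (fun l => k%:E * (EFin \o f) l)%E = EFin \o (fun l => k * f l) by [].
by [].
Qed.

Lemma intD (f g : R -> R) : mu.-integrable D0 (EFin \o f) ->
  mu.-integrable D0 (EFin \o g) -> mu.-integrable D0 (EFin \o (fun l => f l + g l)).
Proof.
move=> hf hg; have := integrableD mD0 hf hg.
by have -> : ((EFin \o f) \+ (EFin \o g))%E = EFin \o (fun l => f l + g l) by [].
Qed.

Lemma norm_le_sqrt (u v : R) : `|u| <= Num.sqrt (u ^+ 2 + v ^+ 2).
Proof.
by rewrite -sqrtr_sqr ler_sqrt ?addr_ge0 ?sqr_ge0 // lerDl sqr_ge0.
Qed.

Lemma cs_le (c s u v : R) : c ^+ 2 + s ^+ 2 = 1 ->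
  c * u + s * v <= Num.sqrt (u ^+ 2 + v ^+ 2).
Proof.
move=> hcs; apply: le_trans (ler_norm _) _.
rewrite -sqrtr_sqr ler_sqrt ?addr_ge0 ?sqr_ge0 //.
rewrite -subr_ge0.
have -> : u ^+ 2 + v ^+ 2 - (c * u + s * v) ^+ 2 =
  (s * u - c * v) ^+ 2 + (u ^+ 2 + v ^+ 2) * (1 - (c ^+ 2 + s ^+ 2)) by ring.
by rewrite hcs subrr mulr0 addr0 sqr_ge0.
Qed.

Lemma i_uv (x y : R) : 0 < x ->
  mu.-integrable D0 (EFin \o uu x y) /\ mu.-integrable D0 (EFin \o vv x y).
Proof.
move=> x0.
have ig := intZ (Num.sqrt (x ^+ 2 + y ^+ 2)) _ (i_psi x x0).
have hb l : D0 l -> Num.sqrt (uu x y l ^+ 2 + vv x y l ^+ 2) <=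
                   `|Num.sqrt (x ^+ 2 + y ^+ 2) * psi x l|.
  rewrite /= in_itv /= andbT => l0.
  rewrite ger0_norm ?mulr_ge0 ?sqrtr_ge0 ?psi_ge0 ?(ltW l0) //.
  exact: core.
split.
- apply: (le_integrable mD0 _ _ ig).
    by apply/measurable_EFinP; apply: measurable_funTS; exact: m_uu.
  move=> l Dl; rewrite /= lee_fin; apply: le_trans (hb l Dl).
  exact: norm_le_sqrt.
- apply: (le_integrable mD0 _ _ ig).
    by apply/measurable_EFinP; apply: measurable_funTS; exact: m_vv.
  move=> l Dl; rewrite /= lee_fin; apply: le_trans (hb l Dl).
  by rewrite addrC; exact: norm_le_sqrt.
Qed.

Lemma absquot_le (x y : R) : 0 < x -> absquot (F_mu mu) x y <= K x.
Proof.
move=> x0.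
rewrite /absquot Normc.normcM Normc.normcV /F_mu /=.
have -> : (fun l => expR (- (l * x)) * cos (l * y) - expR (- l)) = uu x y by [].
have -> : (fun l => - (expR (- (l * x)) * sin (l * y))) = vv x y by [].
have [iu iv] := i_uv x y x0.
set A := Rintegral _ _ (uu x y); set B := Rintegral _ _ (vv x y).
set N := Num.sqrt (x ^+ 2 + y ^+ 2).
have N0 : 0 < N.
  rewrite sqrtr_gt0 ltr_wpDr ?sqr_ge0 // exprn_gt0 //.
rewrite ler_pdivrMr // mulrC.
set S := Num.sqrt (A ^+ 2 + B ^+ 2).
have hS2 : S ^+ 2 = A ^+ 2 + B ^+ 2 by rewrite sqr_sqrtr // addr_ge0 ?sqr_ge0.
have [S0|S0] := eqVneq S 0.
  by rewrite S0 mulr_ge0 // ?K_ge0 // ltW.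
set c := A / S; set s := B / S.
have hcs : c ^+ 2 + s ^+ 2 = 1.
  by rewrite /c /s !expr_div_n -mulrDl -hS2 divff // expf_neq0.
have -> : S = c * A + s * B.
  rewrite /c /s mulrAC [B / S * B]mulrAC -mulrDl -!expr2 -hS2 expr2 mulrK //.
  by rewrite unitfE.
rewrite -RintegralZl // -RintegralZl // -RintegralD //; try exact: intZ.
rewrite /K -RintegralZl //; last exact: i_psi.
apply: le_Rintegral => //.
- by apply: intD; exact: intZ.
- exact: intZ _ _ (i_psi x x0).
move=> l; rewrite /= in_itv /= andbT => l0.
apply: le_trans (cs_le c s (uu x y l) (vv x y l) hcs) _.
exact: (core l x y l0 x0).
Qed.

Lemma psi_le2 {x l : R} : 0 < x -> 0 <= l -> psi x l <= 2 / x.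
Proof.
move=> x0 l0; rewrite /psi ge_min; apply/orP; right.
rewrite ler_pM2r ?invr_gt0 //.
have E1 : expR (- (l * x)) <= 1 by rewrite -expR0 ler_expR oppr_le0 mulr_ge0 // ltW.
have e1 : expR (- l) <= 1 by rewrite -expR0 ler_expR oppr_le0.
lra.
Qed.

Lemma Kseq : (fun n : nat => K n.+1%:R) @ \oo --> 0.
Proof.
have h : (\int[mu]_(l in D0) (psi n.+1%:R l)%:E)%E @[n --> \oo] -->
         (\int[mu]_(l in D0) (cst 0%E l))%E.
  apply: (@dominated_cvg _ _ _ mu D0 mD0 (fun n l => (psi n.+1%:R l)%:E) (cst 0%E)
     (EFin \o psi 1)).
  - move=> n; apply/measurable_EFinP; apply: measurable_funTS; exact: m_psi.
  - move=> l; rewrite /= in_itv /= andbT => l0.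
    apply: cvg_EFin; first exact: nearW.
    apply: (@squeeze_cvgr _ _ _ _ (cst 0) (fun n => 2 * harmonic n)).
    + apply: nearW => n /=; apply/andP; split.
        exact: (psi_ge0 _ _ (ltr0Sn _ _) (ltW l0)).
      exact: (psi_le2 (ltr0Sn _ _) (ltW l0)).
    + exact: cvg_cst.
    + rewrite -(mulr0 2); apply: cvgMr; exact: cvg_harmonic.
  - by [].
  - exact: i_psi ltr01.
  - move=> n l; rewrite /= in_itv /= andbT => l0.
    rewrite lee_fin ger0_norm ?psi_ge0 ?(ltW l0) //.
    by apply: psi_mono => //; rewrite ler1n.
rewrite integral0 in h.
exact: fine_cvg h.
Qed.

Lemma K_lim : K x @[x --> +oo] --> 0.
Proof.
apply/cvgrPdist_le => e e0.
have [N _ HN] := (cvgrPdist_le _ _).1 Kseq e e0.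
exists N.+1%:R; split; first exact: num_real.
move=> x Nx.
have x0 : 0 < x by apply: lt_trans Nx.
have := HN N (leqnn N); rewrite /= !sub0r !normrN.
rewrite !ger0_norm ?K_ge0 //.
apply: le_trans; apply: K_mono => //; exact: ltW.
Qed.
End MU.

Section C.
Context {R : realType}.
Definition ef (y : R) := expR (- (pi * `|y|)).

Lemma ef_ge0 y : 0 <= ef y. Proof. exact: expR_ge0. Qed.

Lemma ef_cont : continuous ef.
Proof.
move=> y; rewrite /ef.
apply: continuous_comp; last exact: continuous_expR.
apply: (@continuousN _ R^o).
apply: (@continuousM R R^o (cst pi) normr); first exact: cst_continuous.
exact: norm_continuous.
Qed.

Lemma m_ef : measurable_fun [set: R] ef.
Proof. exact: continuous_measurable_fun ef_cont. Qed.

Lemma C_fin : (\int[lebesgue_measure]_(y in [set: R]) (ef y)%:E <= (2 / pi)%:E)%E.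
Proof.
rewrite ge0_symfun_integralT; [|exact: ef_ge0|exact: ef_cont|by move=> y /=; rewrite /ef normrN].
have pi0 : 0 < (pi : R) := pi_gt0 R.
have h : (\int[lebesgue_measure]_(x in [set x : R | (0 <= x)%R]) (ef x)%:E <=
          (pi^-1)%:E * \int[lebesgue_measure]_x (exponential_pdf pi x)%:E)%E.
  rewrite -integralZl //; last exact: integrable_exponential_pdf.
  rewrite [X in (X <= _)%E]integral_mkcond.
  apply: le_integral_nm.
    by move=> x _; apply: erestrict_ge0 => y _; rewrite lee_fin ef_ge0.
  move=> x _ /=; rewrite /patch; case: ifPn => [|_].
    rewrite inE /= => x0; rewrite exponential_pdfE // /ef ger0_norm //.
    by rewrite lee_fin mulrA mulVf ?gt_eqF // mul1r mulNr.
  by rewrite lee_fin mulr_ge0 ?invr_ge0 ?exponential_pdf_ge0 ?ltW.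
rewrite integral_exponential_pdf // mule1 in h.
rewrite (_ : (2 / pi)%:E = 2%:E * (pi^-1)%:E)%E; last by rewrite -EFinM.
by apply: lee_wpmul2l.
Qed.
End C.

Section Main.
Context {R : realType} (mu : {measure set R -> \bar R}).
Hypothesis hmu : (\int[mu]_(l in `]0%R, +oo[) (l / (l ^+ 2 + 1))%:E < +oo)%E.

Lemma absquot_ge0 (Phi : R[i] -> R[i]) (x y : R) : 0 <= absquot Phi x y.
Proof. by rewrite /absquot; case: (Phi _ / _) => a b /=; exact: sqrtr_ge0. Qed.

Lemma I_bound (x : R) : 0 < x ->
  (0 <= \int[lebesgue_measure]_(y in [set: R])
          (absquot (F_mu mu) x y * expR (- (pi * `|y|)))%:E)%E /\
  (\int[lebesgue_measure]_(y in [set: R])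
          (absquot (F_mu mu) x y * expR (- (pi * `|y|)))%:E <= (K mu x * (2 / pi))%:E)%E.
Proof.
move=> x0; split.
  by apply: integral_ge0 => y _; rewrite lee_fin mulr_ge0 ?absquot_ge0 ?expR_ge0.
have K0 := K_ge0 mu x x0.
apply: (@le_trans _ _ (\int[lebesgue_measure]_(y in [set: R]) ((K mu x)%:E * (ef y)%:E))%E).
  apply: le_integral_nm => y _.
    by rewrite lee_fin mulr_ge0 ?absquot_ge0 ?expR_ge0.
  rewrite -EFinM lee_fin ler_wpM2r ?expR_ge0 //; exact: absquot_le.
have ef0 : forall y, [set: R] y -> (0 <= (ef y)%:E)%E by move=> y _; rewrite lee_fin ef_ge0.
have mef : measurable_fun [set: R] (EFin \o ef) by apply/measurable_EFinP; exact: m_ef.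
rewrite (ge0_integralZl_EFin lebesgue_measure measurableT ef0 mef K0) EFinM.
by apply: lee_wpmul2l; [rewrite lee_fin | exact: C_fin].
Qed.

Lemma Iab_bound (a b y : R) : 0 < a -> a < b ->
  (0 <= (expR (- (pi * `|y|)))%:E *
     \int[lebesgue_measure]_(x in `[a, b]) (absquot (F_mu mu) x y)%:E <=
   (expR (- (pi * `|y|)) * (K mu a * (b - a)))%:E)%E.
Proof.
move=> a0 ab.
have Ka := K_ge0 mu a a0.
apply/andP; split.
  apply: mule_ge0; first by rewrite lee_fin expR_ge0.
  by apply: integral_ge0 => x _; rewrite lee_fin absquot_ge0.
rewrite EFinM; apply: lee_wpmul2l; first by rewrite lee_fin expR_ge0.
apply: (@le_trans _ _ (\int[lebesgue_measure]_(x in `[a, b]) (K mu a)%:E)%E).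
  apply: le_integral_nm => x.
    by move=> _; rewrite lee_fin absquot_ge0.
  rewrite /= in_itv /= => /andP[ax _].
  have x0 : 0 < x by apply: lt_le_trans ax.
  rewrite lee_fin; apply: le_trans (absquot_le mu hmu x y x0) _.
  exact: K_mono.
rewrite integral_cst //= lebesgue_measure_itv /= lte_fin ab -EFinB -EFinM.
by [].
Qed.

Lemma lim0 {F : set_system R} {FF : Filter F} (g : R -> \bar R) (h : R -> R) :
  (\forall y \near F, (0 <= g y <= (h y)%:E)%E) -> h y @[y --> F] --> 0 ->
  g y @[y --> F] --> 0%E.
Proof.
move=> H hl.
apply: (@squeeze_cvge _ _ _ _ (cst 0%E) g (EFin \o h)) => //.
  exact: cvg_cst.
apply: cvg_EFin; [exact: nearW | exact: hl].
Qed.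

Lemma exp_small (M e y : R) : 0 <= M -> 0 < e -> M / (pi * e) < `|y| ->
  expR (- (pi * `|y|)) * M <= e.
Proof.
have pi0 : 0 < (pi : R) := pi_gt0 R.
move=> M0 e0 hy.
have y0 : 0 < `|y|.
  by apply: le_lt_trans hy; rewrite divr_ge0 // mulr_ge0 // ltW.
have t0 : 0 < pi * `|y| by rewrite mulr_gt0.
apply: le_trans (_ : (pi * `|y|)^-1 * M <= e).
  by rewrite ler_wpM2r // expN_le_inv.
rewrite mulrC ler_pdivrMr //.
rewrite ltr_pdivrMr ?mulr_gt0 // in hy.
have -> : e * (pi * `|y|) = `|y| * (pi * e) by ring.
exact: ltW.
Qed.

Lemma exp_lim_p (M : R) : 0 <= M -> expR (- (pi * `|y|)) * M @[y --> +oo] --> 0.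
Proof.
move=> M0; apply/cvgrPdist_le => e e0.
exists (M / (pi * e)); split; first exact: num_real.
move=> y hy; rewrite sub0r normrN ger0_norm ?mulr_ge0 ?expR_ge0 //.
apply: exp_small => //; apply: lt_le_trans hy _; exact: ler_norm.
Qed.

Lemma exp_lim_n (M : R) : 0 <= M -> expR (- (pi * `|y|)) * M @[y --> -oo] --> 0.
Proof.
move=> M0; apply/cvgrPdist_le => e e0.
exists (- (M / (pi * e))); split; first exact: num_real.
move=> y hy; rewrite sub0r normrN ger0_norm ?mulr_ge0 ?expR_ge0 //.
apply: exp_small => //; rewrite ltrNr in hy; apply: lt_le_trans hy _.
by rewrite -normrN ler_norm.
Qed.
End Main.

Theorem lemma5p1 (R : realType) (mu : {measure set R -> \bar R})
  (hmu : (\int[mu]_(l in `]0%R, +oo[) (l / (l ^+ 2 + 1))%:E < +oo)%E) :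
  let Phi := F_mu mu in
  (forall a b : R, 0 < a -> a < b ->
     ((fun y : R => (expR (- (pi * `|y|)))%:E *
         \int[lebesgue_measure]_(x in `[a, b]) (absquot Phi x y)%:E)%E
        @ +oo --> 0%E) /\
     ((fun y : R => (expR (- (pi * `|y|)))%:E *
         \int[lebesgue_measure]_(x in `[a, b]) (absquot Phi x y)%:E)%E
        @ -oo --> 0%E)) /\
  (forall eta : R, 0 < eta ->
     (ereal_sup ((fun x : R => \int[lebesgue_measure]_(y in [set: R])
                       (absquot Phi x y * expR (- (pi * `|y|)))%:E)%E
                 @` `[eta, +oo[) < +oo)%E) /\
  ((fun x : R => \int[lebesgue_measure]_(y in [set: R])
                   (absquot Phi x y * expR (- (pi * `|y|)))%:E)%E
     @ +oo --> 0%E).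
Proof.
move=> Phi; rewrite /Phi.
have pi0 : 0 < (pi : R) := pi_gt0 R.
split; [|split].
- move=> a b a0 ab.
  have M0 : 0 <= K mu a * (b - a) by rewrite mulr_ge0 ?K_ge0 // subr_ge0 ltW.
  split.
    apply: (lim0 _ (fun y => expR (- (pi * `|y|))* (K mu a * (b - a)))).
      by apply: nearW => y; exact: Iab_bound.
    exact: exp_lim_p.
  apply: (lim0 _ (fun y => expR (- (pi * `|y|)) * (K mu a * (b - a)))).
    by apply: nearW => y; exact: Iab_bound.
  exact: exp_lim_n.
- move=> eta eta0.
  apply: (@le_lt_trans _ _ (K mu eta * (2 / pi))%:E); last exact: ltry.
  apply: ge_ereal_sup => _ [x /= hx <-].
  rewrite in_itv /= andbT in hx.
  have x0 : 0 < x by apply: lt_le_trans hx.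
  apply: le_trans (I_bound mu hmu x x0).2 _.
  have c0 : 0 <= 2 / (pi : R) by rewrite divr_ge0 // ltW.
  rewrite lee_fin ler_wpM2r //.
  exact: (K_mono mu hmu eta x eta0 hx).
- apply: (lim0 _ (fun x => K mu x * (2 / pi))).
    exists 0; split; first exact: num_real.
    move=> x x0; apply/andP; exact: I_bound.
  rewrite -(mul0r (2 / pi)); apply: cvgMl; exact: K_lim.
Qed.
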